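(* There is an absolute constant $c>0$ such that for all real $\mu,\mu^*>0$ with $\mu\in[c,\tfrac43\mu^*]$, the function $$G(\mu,\mu^* )=\mathbb E_{x\sim\mathcal N(\mu^*,1)}\Big[-\tfrac12\tanh''(\mu x)\mu^2x+\tanh'(\mu x)\mu x^2-\tanh'(\mu x)\mu\Big]$$ satisfies $G(\mu,\mu^* )\le0.01\,|\mu-\mu^*|$. *)

(* Defs.v *)
From Stdlib Require Import Reals.
From Coquelicot Require Export Coquelicot.
Open Scope R_scope.

Definition tanh (x : R) : R := (exp x - exp (- x)) / (exp x + exp (- x)).

Definition gauss_density (m x : R) : R :=
  exp (- (x - m) ^ 2 / 2) / sqrt (2 * PI).

Definition gauss_expect (m : R) (f : R -> R) : R :=
  RInt_gen (fun x => gauss_density m x * f x)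
    (Rbar_locally m_infty) (Rbar_locally p_infty).

Definition G (mu mus : R) : R :=
  gauss_expect mus (fun x =>
    - / 2 * Derive_n tanh 2 (mu * x) * mu ^ 2 * x
    + Derive_n tanh 1 (mu * x) * mu * x ^ 2
    - Derive_n tanh 1 (mu * x) * mu).

(* Main.v *)
Require Import Defs.
From Stdlib Require Import Reals.
From Stdlib Require Import Lra FunctionalExtensionality.
Open Scope R_scope.


Lemma atan_le_id y : 0 <= y -> atan y <= y.
Proof.
  intros Hy.
  destruct (MVT_gen atan 0 y (fun x => / (1 + x^2))) as [c [Hc Heq]].
  - intros x _. pose proof (is_derive_atan x) as H. unfold Rsqr in H.
    replace (x^2) with (x*x) by ring. exact H.
  - intros x _. apply derivable_continuous_pt, derivable_pt_atan.
  - rewrite atan_0 in Heq.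
    assert (0 < 1 + c^2) by nra.
    assert (/ (1 + c^2) <= 1).
    { rewrite <- Rinv_1. apply Rinv_le_contravar; nra. }
    assert (0 <= /(1+c^2)) by (apply Rlt_le, Rinv_0_lt_compat; lra).
    nra.
Qed.

Lemma cont_of_derive (f : R -> R) x : ex_derive f x -> continuous f x.
Proof. intro H. exact (@ex_derive_continuous R_AbsRing R_NormedModule f x H). Qed.

Lemma ex_RInt_cont (g : R -> R) u v : (forall x, continuous g x) -> ex_RInt g u v.
Proof. intro H. apply (@ex_RInt_continuous R_CompleteNormedModule). intros; apply H. Qed.

Lemma is_RInt_K_atan K p q :
  is_RInt (fun x => K / (1 + x^2)) p q (K * (atan q - atan p)).
Proof.
  replace (K * (atan q - atan p)) with (minus (K * atan q) (K * atan p))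
    by (unfold minus, plus, opp; simpl; ring).
  apply (is_RInt_derive (fun x => K * atan x)).
  - intros x _. 
    pose proof (is_derive_atan x) as H.
    apply (is_derive_scal _ x K) in H. unfold Rsqr in H.
    replace (K / (1 + x^2)) with (K * / (1 + x*x)) by (unfold Rdiv; f_equal; f_equal; ring).
    exact H.
  - intros x _. apply cont_of_derive. auto_derive. nra.
Qed.

Lemma RInt_atan_bound (g : R -> R) K
  (Hc : forall x, continuous g x) (Hb : forall x, Rabs (g x) <= K / (1 + x^2)) p q :
  Rabs (RInt g p q) <= K * Rabs (atan q - atan p).
Proof.
  assert (HK : 0 <= K).
  { specialize (Hb 0). pose proof (Rabs_pos (g 0)).
    replace (1 + 0^2) with 1 in Hb by ring. lra. }
  assert (Hex : forall u v, ex_RInt g u v).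
  { intros u v. apply ex_RInt_cont, Hc. }
  assert (Hle : forall u v, u <= v -> Rabs (RInt g u v) <= K * (atan v - atan u)).
  { intros u v Huv.
    eapply Rle_trans. apply abs_RInt_le; auto.
    rewrite <- (is_RInt_unique _ _ _ _ (is_RInt_K_atan K u v)).
    apply RInt_le; [exact Huv | | | intros x _; apply Hb].
    - apply ex_RInt_cont. intros. apply (continuous_comp g Rabs). apply Hc.
      apply continuous_Rabs.
    - eexists. apply is_RInt_K_atan. }
  destruct (Rle_or_lt p q) as [H|H].
  - rewrite (Rabs_pos_eq (atan q - atan p)). now apply Hle.
    assert (atan p <= atan q).
    { destruct H as [H|H]. apply Rlt_le, atan_increasing, H. subst; lra. }
    lra.
  - rewrite <- opp_RInt_swap by auto. 
    change (Rabs (- RInt g q p) <= K * Rabs (atan q - atan p)).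
    rewrite Rabs_Ropp.
    rewrite (Rabs_left (atan q - atan p)) by (pose proof (atan_increasing _ _ H); lra).
    replace (- (atan q - atan p)) with (atan p - atan q) by ring.
    apply Hle; lra.
Qed.

Lemma atan_tail M v : 0 < M -> M < v -> PI/2 - /M < atan v < PI/2.
Proof.
  intros HM Hv. pose proof (atan_bound v). split; [|lra].
  pose proof (atan_increasing _ _ Hv).
  pose proof (atan_inv M HM).
  pose proof (atan_le_id (/M) (Rlt_le _ _ (Rinv_0_lt_compat _ HM))). lra.
Qed.

Lemma dom_is_RInt_gen (g : R -> R) K
  (Hc : forall x, continuous g x) (Hb : forall x, Rabs (g x) <= K / (1 + x^2)) :
  exists L, is_RInt_gen g (Rbar_locally m_infty) (Rbar_locally p_infty) L.
Proof.
  assert (HK : 0 <= K).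
  { specialize (Hb 0). pose proof (Rabs_pos (g 0)).
    replace (1 + 0^2) with 1 in Hb by ring. lra. }
  assert (Hex : forall u v, ex_RInt g u v) by (intros; apply ex_RInt_cont, Hc).
  assert (HP : ProperFilter (filter_prod (Rbar_locally m_infty) (Rbar_locally p_infty))).
  { apply filter_prod_proper; apply Rbar_locally_filter. }
  destruct (proj1 (filterlim_locally_cauchy (U:=R_CompleteSpace)
     (fun ab : R * R => RInt g (fst ab) (snd ab)))) as [y Hy].
  { intros eps.
    set (M := 2 * K / eps + 1).
    assert (HM : 0 < M).
    { unfold M. pose proof (cond_pos eps). 
      assert (0 <= 2 * K / eps) by (apply Rdiv_le_0_compat; lra). lra. }
    exists (fun ab : R * R => fst ab < - M /\ M < snd ab). split.
    - apply (Filter_prod _ _ _ (fun u => u < - M) (fun v => M < v)).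
      + exists (-M). auto.
      + exists M. auto.
      + intros x y Hx Hy. simpl. auto.
    - intros [u1 v1] [u2 v2] [H1 H2] [H3 H4]. simpl in *.
      change (Rabs (RInt g u2 v2 - RInt g u1 v1) < eps).
      rewrite <- (RInt_Chasles g u1 u2 v1) by auto.
      rewrite <- (RInt_Chasles g u2 v2 v1) by auto.
      change (Rabs (RInt g u2 v2 - (RInt g u1 u2 + (RInt g u2 v2 + RInt g v2 v1))) < eps).
      replace (RInt g u2 v2 - (RInt g u1 u2 + (RInt g u2 v2 + RInt g v2 v1)))
        with (- (RInt g u1 u2 + RInt g v2 v1)) by ring.
      rewrite Rabs_Ropp.
      eapply Rle_lt_trans. apply Rabs_triang.
      pose proof (RInt_atan_bound g K Hc Hb u1 u2).
      pose proof (RInt_atan_bound g K Hc Hb v2 v1).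
      pose proof (atan_tail M v1 HM H2).
      pose proof (atan_tail M v2 HM H4).
      pose proof (atan_tail M (-u1) HM ltac:(lra)).
      pose proof (atan_tail M (-u2) HM ltac:(lra)).
      rewrite atan_opp in *.
      assert (Rabs (atan u2 - atan u1) <= /M) by (apply Rabs_le; lra).
      assert (Rabs (atan v1 - atan v2) <= /M) by (apply Rabs_le; lra).
      assert (K * Rabs (atan u2 - atan u1) + K * Rabs (atan v1 - atan v2) <= 2 * K / M).
      { unfold Rdiv. assert (K * Rabs (atan u2 - atan u1) <= K * / M) by (apply Rmult_le_compat_l; lra).
        assert (K * Rabs (atan v1 - atan v2) <= K * / M) by (apply Rmult_le_compat_l; lra).
        lra. }
      assert (2 * K / M < eps).
      { apply Rlt_div_l; [lra|]. unfold M. pose proof (cond_pos eps).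
        unfold Rdiv. rewrite Rmult_plus_distr_l, Rmult_1_r.
        replace (eps * (2 * K * / eps)) with (2 * K) by (field; lra). lra. }
      lra. }
  exists y. intros P HPy. unfold filtermapi.
  apply (filter_imp (fun ab : R * R => P (RInt g (fst ab) (snd ab)))).
  - intros [u v] Huv. exists (RInt g u v). split; [apply (@RInt_correct R_CompleteNormedModule), Hex | exact Huv].
  - apply Hy. exact HPy.
Qed.

Lemma is_RInt_gen_approx (g : R -> R) L :
  is_RInt_gen g (Rbar_locally m_infty) (Rbar_locally p_infty) L ->
  forall eps, 0 < eps -> exists N, forall n, N <= n -> Rabs (RInt g (-n) n - L) < eps.
Proof.
  intros H eps Heps.
  specialize (H _ (locally_ball L (mkposreal eps Heps))).
  destruct H as [Q R [M1 HQ] [M2 HR] HQR].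
  exists (Rmax (-M1) M2 + 1). intros n Hn.
  destruct (HQR (-n) n) as [y [Hy1 Hy2]].
  - apply HQ. pose proof (Rmax_l (-M1) M2). lra.
  - apply HR. pose proof (Rmax_r (-M1) M2). lra.
  - simpl in Hy1. rewrite (is_RInt_unique _ _ _ _ Hy1). exact Hy2.
Qed.

Lemma tanh_E y : Defs.tanh y = (exp y - / exp y) / (exp y + / exp y).
Proof. unfold Defs.tanh. now rewrite exp_Ropp. Qed.

Lemma sech_E y : 1 - Defs.tanh y ^ 2 = 4 / (exp y + / exp y) ^ 2.
Proof.
  rewrite tanh_E. pose proof (exp_pos y).
  assert (0 < exp y + / exp y) by (pose proof (Rinv_0_lt_compat _ H); lra).
  field. split; nra.
Qed.

Lemma tanh_abs y : Rabs (Defs.tanh y) <= 1.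
Proof.
  rewrite tanh_E. pose proof (exp_pos y) as H. pose proof (Rinv_0_lt_compat _ H).
  unfold Rdiv. rewrite Rabs_mult, Rabs_inv, (Rabs_pos_eq (exp y + / exp y)) by lra.
  apply (Rmult_le_reg_r (exp y + / exp y)); [lra|].
  rewrite Rmult_assoc, Rinv_l, Rmult_1_r, Rmult_1_l by lra.
  apply Rabs_le; lra.
Qed.

Lemma sech_nonneg y : 0 <= 1 - Defs.tanh y ^ 2.
Proof. pose proof (tanh_abs y). assert (Defs.tanh y ^ 2 <= 1). { 
  replace (Defs.tanh y ^2) with (Rabs (Defs.tanh y) * Rabs (Defs.tanh y)).
  pose proof (Rabs_pos (Defs.tanh y)). nra. rewrite <- Rabs_mult. simpl. rewrite Rmult_1_r.
  apply Rabs_pos_eq. nra. } lra. Qed.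

Lemma is_derive_tanh y : is_derive Defs.tanh y (1 - Defs.tanh y ^ 2).
Proof.
  unfold Defs.tanh. pose proof (exp_pos y). pose proof (exp_pos (-y)).
  auto_derive. lra. field. lra.
Qed.

Lemma Derive_tanh y : Derive Defs.tanh y = 1 - Defs.tanh y ^ 2.
Proof. apply is_derive_unique, is_derive_tanh. Qed.

Lemma is_derive_sech y : is_derive (fun y => 1 - Defs.tanh y ^ 2) y (-2 * Defs.tanh y * (1 - Defs.tanh y ^ 2)).
Proof.
  unfold Defs.tanh. pose proof (exp_pos y). pose proof (exp_pos (-y)).
  auto_derive. lra. field. lra.
Qed.

Lemma Derive2_tanh y : Derive_n Defs.tanh 2 y = -2 * Defs.tanh y * (1 - Defs.tanh y ^ 2).
Proof.
  simpl. rewrite (Derive_ext _ (fun y => 1 - Defs.tanh y ^ 2)).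
  apply is_derive_unique, is_derive_sech.
  intro t. apply Derive_tanh.
Qed.

Lemma Derive1_tanh y : Derive_n Defs.tanh 1 y = 1 - Defs.tanh y ^ 2.
Proof. apply Derive_tanh. Qed.

Lemma exp_sq z : 0 <= z -> (1 + z/2)^2 <= exp z.
Proof.
  intros Hz.
  replace z with (z/2 + z/2) at 2 by field. rewrite exp_plus.
  pose proof (exp_ineq1_le (z/2)). pose proof (exp_pos (z/2)).
  set (e := exp (z/2)) in *. set (u := 1 + z/2) in *.
  replace (u^2) with (u*u) by ring.
  apply Rmult_le_compat; unfold u in *; lra.
Qed.

Lemma exp_cube z : 0 <= z -> (z/3)^3 <= exp z.
Proof.
  intros Hz.
  replace z with (z/3 + z/3 + z/3) at 2 by field. rewrite !exp_plus.
  pose proof (exp_ineq1_le (z/3)).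
  replace (exp (z/3) * exp (z/3) * exp (z/3)) with (exp (z/3) ^ 3) by ring.
  apply pow_incr. lra.
Qed.

Lemma D_lower y : (1 + y^2) / 4 <= exp y + / exp y.
Proof.
  rewrite <- exp_Ropp.
  pose proof (exp_pos y). pose proof (exp_pos (-y)).
  destruct (Rle_or_lt 0 y).
  - pose proof (exp_sq y ltac:(lra)). nra.
  - pose proof (exp_sq (-y) ltac:(lra)). nra.
Qed.

Lemma sech_poly y : (1 - Defs.tanh y ^ 2) * (1 + y^2)^2 <= 64.
Proof.
  rewrite sech_E. pose proof (D_lower y).
  set (D := exp y + / exp y) in *.
  assert (0 < D) by (pose proof (pow2_ge_0 y); lra).
  assert ((1 + y^2)^2 <= 16 * D^2).
  { assert (0 <= (1 + y^2)) by (pose proof (pow2_ge_0 y); lra).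
    replace (16 * D^2) with ((4*D)^2) by ring. apply pow_incr. lra. }
  replace (4 / D ^ 2 * (1 + y ^ 2) ^ 2) with ((4 * (1 + y ^ 2) ^ 2) / D^2) by (field; lra).
  apply Rle_div_l. apply pow_lt; lra. lra.
Qed.

Lemma sech_tail y : 0 <= y -> (1 - Defs.tanh y ^ 2) * y^6 <= 2916.
Proof.
  intros Hy. rewrite sech_E.
  pose proof (exp_cube y Hy). pose proof (exp_pos y).
  pose proof (Rinv_0_lt_compat _ H0).
  set (D := exp y + / exp y) in *.
  assert (0 < D) by (unfold D; lra).
  assert (y^6 <= 729 * D^2).
  { replace (y^6) with (729 * ((y/3)^3)^2) by field.
    apply Rmult_le_compat_l; [lra|]. apply pow_incr. split.
    apply pow_le; lra. unfold D; lra. }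
  replace (4 / D ^ 2 * y^6) with ((4 * y^6) / D^2) by (field; lra).
  apply Rle_div_l. apply pow_lt; lra. lra.
Qed.

Definition ff (b x : R) :=
  b * (1 - Defs.tanh (b*x) ^ 2) * (b * x * Defs.tanh (b*x) + x^2 - 1).

Lemma ff_bound b x : 1 <= b ->
  Rabs (ff b x) * (1 + x^2) <= 2 * b * ((1 - Defs.tanh (b*x) ^ 2) * (1 + (b*x)^2)^2).
Proof.
  intros Hb. unfold ff.
  set (y := b * x). set (t := Defs.tanh y). set (S := 1 - t^2).
  assert (HS : 0 <= S) by apply sech_nonneg.
  assert (Ht : Rabs t <= 1) by apply tanh_abs.
  assert (Hxy : x^2 <= y^2).
  { unfold y. replace ((b*x)^2) with (b^2 * x^2) by ring.
    assert (1 <= b^2) by nra. pose proof (pow2_ge_0 x). nra. }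
  assert (Hyt : Rabs (y * t) <= Rabs y).
  { rewrite Rabs_mult. pose proof (Rabs_pos y). nra. }
  assert (Hy1 : Rabs y <= 1 + y^2).
  { unfold Rabs; destruct (Rcase_abs y); nra. }
  assert (H1 : Rabs (y * t + x^2 - 1) <= 2 * (1 + y^2)).
  { eapply Rle_trans. apply Rabs_triang. rewrite Rabs_Ropp, Rabs_R1.
    eapply Rle_trans. apply Rplus_le_compat_r. apply Rabs_triang.
    rewrite (Rabs_pos_eq (x^2)) by apply pow2_ge_0. lra. }
  replace (b * x * t) with (y * t) by (unfold y; ring).
  rewrite Rabs_mult, Rabs_mult, (Rabs_pos_eq b), (Rabs_pos_eq S) by lra.
  assert (0 <= 1 + x^2) by (pose proof (pow2_ge_0 x); lra).
  assert (0 <= b * S) by nra.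
  assert (Rabs (y * t + x ^ 2 - 1) * (1 + x^2) <= 2 * (1 + y^2) * (1 + y^2)).
  { apply Rmult_le_compat; try lra. apply Rabs_pos. }
  replace ((1 + y^2)^2) with ((1 + y^2) * (1 + y^2)) by ring.
  replace (b * S * Rabs (y * t + x ^ 2 - 1) * (1 + x ^ 2)) with
    ((b * S) * (Rabs (y * t + x ^ 2 - 1) * (1 + x ^ 2))) by ring.
  replace (2 * b * (S * ((1 + y ^ 2) * (1 + y ^ 2)))) with
    ((b * S) * (2 * (1 + y ^ 2) * (1 + y ^ 2))) by ring.
  apply Rmult_le_compat_l; lra.
Qed.

Lemma sqrt2PI_ge1 : 1 <= sqrt (2 * PI).
Proof.
  rewrite <- sqrt_1. apply sqrt_le_1_alt. pose proof PI2_1. lra.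
Qed.

Lemma gauss_bounds m x : 0 <= gauss_density m x <= 1.
Proof.
  unfold gauss_density. pose proof sqrt2PI_ge1.
  pose proof (exp_pos (- (x - m) ^ 2 / 2)).
  assert (exp (- (x - m) ^ 2 / 2) <= 1).
  { rewrite <- exp_0. pose proof (pow2_ge_0 (x - m)).
    destruct (Req_dec ((x-m)^2) 0) as [E|E].
    - rewrite E. replace (-0/2) with 0 by field. lra.
    - left. apply exp_increasing. assert (0 < (x-m)^2) by lra. lra. }
  split.
  - apply Rdiv_le_0_compat; lra.
  - apply Rle_div_l; lra.
Qed.

Lemma wexp_bounds w :
  Rabs (w * exp (- w ^ 2 / 2)) <= 1 /\
  Rabs (w * exp (- w ^ 2 / 2)) * Rabs w ^ 5 <= 216.
Proof.
  set (W := Rabs w).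
  assert (HW : 0 <= W) by apply Rabs_pos.
  assert (Hw2 : w ^ 2 = W ^ 2) by (unfold W; rewrite RPow_abs; 
     rewrite Rabs_pos_eq; [reflexivity| apply pow2_ge_0]).
  replace (- w ^ 2 / 2) with (- (W^2/2)) by (rewrite Hw2; field).
  rewrite exp_Ropp.
  pose proof (exp_pos (W^2/2)) as Hp.
  rewrite Rabs_mult, (Rabs_pos_eq (/ _)) by (apply Rlt_le, Rinv_0_lt_compat; lra).
  fold W.
  pose proof (exp_ineq1_le (W^2/2)).
  pose proof (exp_cube (W^2/2) ltac:(nra)).
  split.
  - replace (W * / exp (W^2/2)) with (W / exp (W^2/2)) by reflexivity.
    apply Rle_div_l; [lra|]. nra.
  - replace (W * / exp (W ^ 2 / 2) * W ^ 5) with (W^6 / exp (W^2/2)) by (field; lra).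
    apply Rle_div_l; [lra|].
    replace ((W ^ 2 / 2 / 3) ^ 3) with (W^6 / 216) in H0 by field. lra.
Qed.

Lemma gd_mvt a b x : exists xi, Rmin b a <= xi <= Rmax b a /\
  gauss_density a x - gauss_density b x =
  ((x - xi) * exp (- (x - xi) ^ 2 / 2) / sqrt (2 * PI)) * (a - b).
Proof.
  pose proof sqrt2PI_ge1.
  destruct (MVT_gen (fun m => gauss_density m x) b a
    (fun m => (x - m) * exp (- (x - m) ^ 2 / 2) / sqrt (2 * PI))) as [c [Hc Heq]].
  - intros m _. unfold gauss_density. auto_derive. lra.
    replace (exp (- ((x + - m) * ((x + - m) * 1)) * / 2)) with (exp (- (x - m) ^ 2 / 2)) by (f_equal; field). field. lra.
  - intros m0 _. apply derivable_continuous_pt.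
    apply ex_derive_Reals_0. unfold gauss_density. auto_derive. lra.
  - exists c. split; [exact Hc| exact Heq].
Qed.

Lemma key_bound b x xi : 1000 <= b -> 3 * b / 4 <= xi ->
  Rabs ((x - xi) * exp (- (x - xi) ^ 2 / 2)) * (Rabs (ff b x) * (1 + x^2)) <= / 400.
Proof.
  intros Hb Hxi.
  set (w := x - xi). set (We := Rabs (w * exp (- w ^ 2 / 2))).
  destruct (wexp_bounds w) as [H1 H5]. fold We in H1, H5.
  assert (HWe : 0 <= We) by apply Rabs_pos.
  pose proof (ff_bound b x ltac:(lra)) as Hff.
  set (Q := Rabs (ff b x) * (1 + x ^ 2)) in *.
  assert (HQ0 : 0 <= Q) by (unfold Q; apply Rmult_le_pos; [apply Rabs_pos | pose proof (pow2_ge_0 x); lra]).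
  set (y := b * x) in *.
  set (S := 1 - Defs.tanh y ^ 2) in *.
  assert (HS : 0 <= S) by apply sech_nonneg.
  destruct (Rle_or_lt x (3 * b / 8)) as [Hx|Hx].
  - (* Gaussian small *)
    pose proof (sech_poly y) as Hp. fold S in Hp.
    assert (HQ : Q <= 128 * b) by nra.
    assert (Hw : 3 * b / 8 <= Rabs w).
    { unfold w. rewrite Rabs_left1 by lra. lra. }
    assert (Hw4 : 375 ^ 4 <= (3 * b / 8) ^ 4) by (apply pow_incr; lra).
    assert (Hw5 : (3 * b / 8) * 375 ^ 4 <= Rabs w ^ 5).
    { replace (Rabs w ^ 5) with (Rabs w * Rabs w ^ 4) by ring.
      assert ((3 * b / 8) ^ 4 <= Rabs w ^ 4) by (apply pow_incr; lra).
      apply Rmult_le_compat; lra. }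
    assert (We * ((3 * b / 8) * 375 ^ 4) <= 216).
    { eapply Rle_trans; [|exact H5]. apply Rmult_le_compat_l; lra. }
    assert (We * Q <= We * (128 * b)) by (apply Rmult_le_compat_l; lra).
    replace (We * ((3 * b / 8) * 375 ^ 4)) with ((We * b) * (59326171875 / 8)) in H by field.
    replace (We * (128 * b)) with ((We * b) * 128) in H0 by ring.
    lra.
  - (* sech small *)
    assert (Hy : 375 * b <= y).
    { assert (0 <= b * (x - 375)) by (apply Rmult_le_pos; lra). unfold y. lra. }
    assert (Hy1 : 1 <= y) by lra.
    pose proof (sech_tail y ltac:(lra)) as Ht. fold S in Ht.
    assert (Hyy : (1 + y^2)^2 <= 4 * y^4).
    { assert (1 + y^2 <= 2 * y^2) by nra. replace (4 * y^4) with ((2 * y^2)^2) by ring.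
      apply pow_incr. pose proof (pow2_ge_0 y). lra. }
    assert (HQ : Q <= 8 * b * (S * y^4)).
    { eapply Rle_trans. exact Hff. 
      assert (S * (1 + y^2)^2 <= S * (4 * y^4)) by (apply Rmult_le_compat_l; lra).
      nra. }
    assert (Hy2 : 140625000 * b <= y^2) by nra.
    assert (HSy : 0 <= S * y^4) by (apply Rmult_le_pos; [lra| apply pow_le; lra]).
    assert ((S * y^4) * (140625000 * b) <= 2916).
    { eapply Rle_trans; [| exact Ht]. replace (S * y^6) with ((S * y^4) * y^2) by ring.
      apply Rmult_le_compat_l; lra. }
    assert (We * Q <= Q) by nra.
    replace (8 * b * (S * y ^ 4)) with ((S * y^4 * b) * 8) in HQ by ring.
    replace ((S * y^4) * (140625000 * b)) with ((S * y^4 * b) * 140625000) in H by ring.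
    lra.
Qed.

Definition Ig (m b x : R) := gauss_density m x * ff b x.

Lemma main_pw a b x : 1000 <= b -> 3 * b / 4 <= a ->
  Rabs (Ig a b x - Ig b b x) <= (Rabs (a - b) / 400) / (1 + x^2).
Proof.
  intros Hb Ha. unfold Ig.
  destruct (gd_mvt a b x) as [xi [Hxi Heq]].
  assert (Hxi' : 3 * b / 4 <= xi).
  { eapply Rle_trans; [|apply Hxi]. apply Rmin_glb; lra. }
  pose proof (key_bound b x xi ltac:(lra) Hxi') as K.
  replace (gauss_density a x * ff b x - gauss_density b x * ff b x)
    with ((gauss_density a x - gauss_density b x) * ff b x) by ring.
  rewrite Heq.
  set (We := (x - xi) * exp (- (x - xi) ^ 2 / 2)) in *.
  pose proof sqrt2PI_ge1.
  assert (Hx2 : 0 < 1 + x^2) by (pose proof (pow2_ge_0 x); lra).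
  apply Rle_div_r; [lra|].
  rewrite !Rabs_mult. unfold Rdiv. rewrite Rabs_mult, Rabs_inv, (Rabs_pos_eq (sqrt _)) by lra.
  assert (0 < / sqrt (2 * PI) <= 1).
  { split. apply Rinv_0_lt_compat; lra. rewrite <- Rinv_1. apply Rinv_le_contravar; lra. }
  pose proof (Rabs_pos We). pose proof (Rabs_pos (a - b)). pose proof (Rabs_pos (ff b x)).
  set (A := Rabs (a - b)) in *. set (W := Rabs We) in *. set (F := Rabs (ff b x)) in *.
  assert (W * (F * (1 + x^2)) <= / 400) by exact K.
  assert (W * / sqrt (2 * PI) * A * F * (1 + x^2) <= W * A * F * (1 + x^2)).
  { replace (W * / sqrt (2 * PI) * A * F * (1 + x^2)) with (/ sqrt (2 * PI) * (W * A * F * (1 + x^2))) by ring.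
    rewrite <- (Rmult_1_l (W * A * F * (1 + x ^ 2))) at 2.
    apply Rmult_le_compat_r; [| lra]. 
    repeat apply Rmult_le_pos; lra. }
  replace (W * A * F * (1 + x^2)) with (A * (W * (F * (1 + x^2)))) in H4 by ring.
  assert (A * (W * (F * (1 + x ^ 2))) <= A * / 400) by (apply Rmult_le_compat_l; lra).
  lra.
Qed.

Lemma crude_pw m b x : 1 <= b -> Rabs (Ig m b x) <= (128 * b) / (1 + x^2).
Proof.
  intros Hb. unfold Ig.
  assert (Hx2 : 0 < 1 + x^2) by (pose proof (pow2_ge_0 x); lra).
  apply Rle_div_r; [lra|].
  pose proof (ff_bound b x Hb). pose proof (sech_poly (b * x)).
  pose proof (gauss_bounds m x).
  rewrite Rabs_mult, (Rabs_pos_eq (gauss_density m x)) by lra.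
  pose proof (Rabs_pos (ff b x)).
  assert (Rabs (ff b x) * (1 + x^2) <= 128 * b) by nra.
  assert (gauss_density m x * (Rabs (ff b x) * (1 + x^2)) <= 1 * (Rabs (ff b x) * (1 + x^2))).
  { apply Rmult_le_compat_r; [|lra]. apply Rmult_le_pos; lra. }
  nra.
Qed.

Lemma Ig_cont m b x : continuous (Ig m b) x.
Proof.
  apply cont_of_derive. unfold Ig, gauss_density, ff, Defs.tanh.
  pose proof sqrt2PI_ge1. pose proof (exp_pos (b*x)). pose proof (exp_pos (-(b*x))).
  auto_derive. repeat split; lra.
Qed.

Definition Phi (b x : R) :=
  - (4 * b * exp (- b ^ 2 / 2) / sqrt (2 * PI)) * x * exp (- x ^ 2 / 2)
   / (exp (b * x) + exp (- (b * x))).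

Lemma Phi_deriv b x : is_derive (Phi b) x (Ig b b x + Ig b b (-x)).
Proof.
  unfold Phi. pose proof sqrt2PI_ge1. pose proof (exp_pos (b*x)). pose proof (exp_pos (-(b*x))).
  auto_derive. lra.
  unfold Ig, ff, gauss_density, Defs.tanh.
  replace (- (x - b) ^ 2 / 2) with (- x^2/2 + b * x + - b^2/2) by field.
  replace (- (- x - b) ^ 2 / 2) with (- x^2/2 + - (b * x) + - b^2/2) by field.
  replace (b * - x) with (- (b * x)) by ring.
  rewrite Ropp_involutive.
  rewrite !exp_plus.
  replace (exp (- (b * (b * 1)) / 2)) with (exp (- b ^ 2 / 2)) by (f_equal; field).
  replace (exp (- (x * (x * 1)) * / 2)) with (exp (- x ^ 2 / 2)) by (f_equal; field).
  rewrite exp_Ropp.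
  set (E := exp (b * x)) in *. set (Q := exp (- x ^ 2 / 2)). set (P := exp (- b ^ 2 / 2)).
  set (S := sqrt (2 * PI)) in *.
  rewrite exp_Ropp in H1. fold E in H1.
  field. split; [|split]; try lra. nra.
Qed.

Lemma Ig_opp_cont b x : continuous (fun x => Ig b b (- x)) x.
Proof.
  apply cont_of_derive. unfold Ig, gauss_density, ff, Defs.tanh.
  pose proof sqrt2PI_ge1. pose proof (exp_pos (b*(-x))). pose proof (exp_pos (-(b*(-x)))).
  auto_derive. repeat split; lra.
Qed.

Lemma Phi_odd b n : Phi b (- n) = - Phi b n.
Proof.
  unfold Phi. replace (b * - n) with (- (b * n)) by ring. rewrite Ropp_involutive.
  replace ((- n) ^ 2) with (n ^ 2) by ring.
  pose proof (exp_pos (b*n)). pose proof (exp_pos (-(b*n))).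
  rewrite (Rplus_comm (exp (- (b * n)))). pose proof sqrt2PI_ge1. field. split; lra.
Qed.

Lemma RInt_opp_sym (f : R -> R) n : (forall x, continuous f x) ->
  RInt (fun x => f (- x)) (- n) n = RInt f (- n) n.
Proof.
  intros Hc.
  assert (Hex : forall u v, ex_RInt f u v) by (intros; apply ex_RInt_cont, Hc).
  pose proof (RInt_comp_lin f (-1) 0 (-n) n (Hex _ _)) as H.
  replace (-1 * - n + 0) with n in H by ring.
  replace (-1 * n + 0) with (- n) in H by ring.
  rewrite <- (opp_RInt_swap f (-n) n) in H by apply Hex.
  rewrite (RInt_ext _ (fun y => opp (f (- y)))) in H.
  - rewrite (RInt_opp (V:=R_CompleteNormedModule) (fun y => f (- y))) in H. 
    + change (- RInt (fun y => f (- y)) (- n) n = - RInt f (- n) n) in H. lra.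
    + apply ex_RInt_cont. intros. apply (continuous_comp Ropp f).
      apply cont_of_derive; auto_derive; auto. apply Hc.
  - intros x _. replace (-1 * x + 0) with (- x) by ring. 
    change (-1 * f (- x) = - f (- x)). ring.
Qed.

Lemma RInt_Ib b n : RInt (Ig b b) (- n) n = Phi b n.
Proof.
  assert (Hs : RInt (fun x => Ig b b x + Ig b b (- x)) (- n) n = 2 * Phi b n).
  { assert (Hd : is_RInt (fun x => Ig b b x + Ig b b (- x)) (- n) n (minus (Phi b n) (Phi b (- n)))).
    { apply (is_RInt_derive (V:=R_CompleteNormedModule) (Phi b)).
      - intros x _. apply Phi_deriv.
      - intros x _. apply (continuous_plus (Ig b b) (fun x => Ig b b (- x))).
        apply Ig_cont. apply Ig_opp_cont. }
    rewrite (is_RInt_unique _ _ _ _ Hd).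
    change (Phi b n - Phi b (- n) = 2 * Phi b n). rewrite Phi_odd. ring. }
  rewrite (RInt_plus (V:=R_CompleteNormedModule) (Ig b b) (fun x => Ig b b (- x))) in Hs.
  - change (RInt (Ig b b) (- n) n + RInt (fun x => Ig b b (- x)) (- n) n = 2 * Phi b n) in Hs.
    rewrite RInt_opp_sym in Hs by apply Ig_cont. lra.
  - apply ex_RInt_cont, Ig_cont.
  - apply ex_RInt_cont. apply Ig_opp_cont.
Qed.

Lemma Phi_small b n : 0 < b -> 1 <= n -> Rabs (Phi b n) <= 864 * b / n.
Proof.
  intros Hb Hn. unfold Phi.
  pose proof sqrt2PI_ge1. pose proof (exp_pos (b*n)). pose proof (exp_pos (-(b*n))).
  pose proof (exp_pos (- b ^ 2 / 2)).
  assert (exp (- b ^ 2 / 2) <= 1).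
  { rewrite <- exp_0. pose proof (pow2_ge_0 b).
    destruct (Req_dec (b^2) 0) as [E|E].
    - rewrite E. replace (-0/2) with 0 by field. lra.
    - left. apply exp_increasing. assert (0 < b^2) by lra. lra. }
  destruct (wexp_bounds n) as [_ W5].
  rewrite (Rabs_pos_eq n) in W5 by lra.
  set (T := Rabs (n * exp (- n ^ 2 / 2))) in *.
  assert (0 <= T) by apply Rabs_pos.
  assert (T * n <= 216).
  { assert (n <= n ^ 5).
    { replace (n^5) with (n * n^4) by ring. 
      assert (1 <= n^4) by (rewrite <- (pow1 4); apply pow_incr; lra). nra. }
    nra. }
  rewrite exp_Ropp in *. set (E := exp (b * n)) in *.
  assert (2 <= E + / E).
  { assert (E + / E - 2 = (E - 1)^2 / E) by (field; lra).
    assert (0 <= (E - 1)^2 / E) by (apply Rdiv_le_0_compat; [apply pow2_ge_0|lra]). lra. }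
  set (P := exp (- b ^ 2 / 2)) in *. set (S := sqrt (2 * PI)) in *.
  assert (P / S <= 1) by (apply Rle_div_l; lra).
  assert (0 <= P / S) by (apply Rdiv_le_0_compat; lra).
  assert (/ (E + / E) <= 1) by (rewrite <- Rinv_1; apply Rinv_le_contravar; lra).
  assert (0 <= / (E + / E)) by (apply Rlt_le, Rinv_0_lt_compat; lra).
  set (c := 4 * b * (P / S) * / (E + / E)).
  assert (Hc0 : 0 <= c) by (unfold c; apply Rmult_le_pos; [apply Rmult_le_pos|]; lra).
  assert (Hc1 : c <= 4 * b).
  { unfold c. rewrite <- (Rmult_1_r (4 * b)) at 2. rewrite Rmult_assoc.
    apply Rmult_le_compat_l; [lra|]. replace 1 with (1 * 1) by ring.
    apply Rmult_le_compat; lra. }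
  replace (- (4 * b * P / S) * n * exp (- n ^ 2 / 2) / (E + / E))
    with (- (c * (n * exp (- n ^ 2 / 2)))) by (unfold c; field; repeat split; try lra; nra).
  rewrite Rabs_Ropp, Rabs_mult, (Rabs_pos_eq c) by lra. fold T.
  apply (proj1 (Rle_div_r (c*T) (864*b) n ltac:(lra))).
  assert (c * T * n <= 4 * b * (T * n)).
  { rewrite Rmult_assoc. apply Rmult_le_compat_r; [nra|lra]. }
  nra.
Qed.


Theorem lemmaC8 : exists c : R, 0 < c /\
  forall mu mus : R, 0 < mu -> 0 < mus -> c <= mu -> mu <= 4 / 3 * mus ->
    G mu mus <= (1 / 100) * Rabs (mu - mus).
Proof.
  exists 1000. split; [lra|]. intros b a Hb0 Ha0 Hb Hba.
  assert (Ha : 3 * b / 4 <= a) by lra.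
  assert (HG : G b a = RInt_gen (Ig a b) (Rbar_locally m_infty) (Rbar_locally p_infty)).
  { unfold G, gauss_expect. f_equal. apply functional_extensionality. intro x.
    unfold Ig, ff. rewrite Derive2_tanh, Derive1_tanh. field. }
  destruct (dom_is_RInt_gen (Ig a b) (128 * b) (Ig_cont a b)
     (fun x => crude_pw a b x ltac:(lra))) as [L HL].
  rewrite HG, (is_RInt_gen_unique _ L HL).
  rewrite Rabs_minus_sym.
  set (B := 1 / 100 * Rabs (a - b)).
  destruct (Rle_or_lt L B) as [HLB|HLB]; [exact HLB|exfalso].
  set (eps := (L - B) / 3).
  assert (Heps : 0 < eps) by (unfold eps; lra).
  destruct (is_RInt_gen_approx _ _ HL eps Heps) as [N HN].
  set (n := Rmax N (Rmax 1 (864 * b / eps + 1))).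
  assert (HnN : N <= n) by apply Rmax_l.
  assert (Hn1 : 1 <= n) by (eapply Rle_trans; [|apply Rmax_r]; apply Rmax_l).
  assert (Hn2 : 864 * b / eps + 1 <= n) by (eapply Rle_trans; [|apply Rmax_r]; apply Rmax_r).
  specialize (HN n HnN).
  assert (Hdec : RInt (Ig a b) (- n) n =
     RInt (fun x => Ig a b x - Ig b b x) (- n) n + RInt (Ig b b) (- n) n).
  { rewrite (RInt_minus (V:=R_CompleteNormedModule) (Ig a b) (Ig b b)).
    - change (RInt (Ig a b) (- n) n = RInt (Ig a b) (- n) n - RInt (Ig b b) (- n) n + RInt (Ig b b) (- n) n). lra.
    - apply ex_RInt_cont, Ig_cont.
    - apply ex_RInt_cont, Ig_cont. }
  assert (Hc : forall x, continuous (fun x => Ig a b x - Ig b b x) x).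
  { intro x. apply (continuous_minus (Ig a b) (Ig b b)); apply Ig_cont. }
  pose proof (RInt_atan_bound _ (Rabs (a - b) / 400) Hc
     (fun x => main_pw a b x Hb Ha) (- n) n) as H1.
  assert (Hat : Rabs (atan n - atan (- n)) <= 4).
  { pose proof (atan_bound n). pose proof (atan_bound (- n)). pose proof PI_4.
    apply Rabs_le. lra. }
  assert (H1' : Rabs (RInt (fun x => Ig a b x - Ig b b x) (- n) n) <= B).
  { eapply Rle_trans. exact H1. unfold B.
    pose proof (Rabs_pos (a - b)).
    assert (Rabs (a - b) / 400 * Rabs (atan n - atan (- n)) <= Rabs (a - b) / 400 * 4).
    { apply Rmult_le_compat_l; [lra|exact Hat]. }
    lra. }
  rewrite RInt_Ib in Hdec.
  pose proof (Phi_small b n ltac:(lra) Hn1) as H2.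
  assert (864 * b / n < eps).
  { apply Rlt_div_l; [lra|].
    assert (864 * b / eps < n) by lra.
    apply Rlt_div_l in H; [|lra]. lra. }
  rewrite Hdec in HN.
  set (R1 := RInt (fun x => Ig a b x - Ig b b x) (- n) n) in *.
  pose proof (Rle_abs (R1 + Phi b n - L)). pose proof (Rle_abs (- (R1 + Phi b n - L))).
  rewrite Rabs_Ropp in H3.
  pose proof (Rle_abs R1). pose proof (Rle_abs (Phi b n)). 
  unfold eps in *. lra.
Qed.
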